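(* Let $m\ge 1$ and let $G=\overline{B(K_m,K_3)}$ be a graph whose vertex set is the disjoint union of a clique $K_m$ and a clique $K_3$ with vertices $1,2,3$, with arbitrary edges between $V(K_m)$ and $\{1,2,3\}$, subject to the conditions that no vertex of $K_m$ is adjacent to all three of $1,2,3$ (i.e. $N_{123}=\emptyset$) and every vertex of $K_m$ is adjacent to at least one of $1,2,3$ (i.e. $N_{\overline{1}\overline{2}\overline{3}}=\emptyset$). Then $G$ is word-representable.
   Context: A graph $G=(V,E)$ is word-representable if there exists a word $w$ over the alphabet $V$, containing every letter of $V$ at least once, such that for all distinct $x,y\in V$, the letters $x$ and $y$ alternate in $w$ (i.e., the subword of $w$ obtained by deleting all letters other than $x,y$ has no two equal consecutive letters) if and only if $xy\in E$. For $i\in\{1,2,3\}$, $N_i$ is the set of neighbours of $i$; $N_{123}$ is the set of $v\in V(K_m)$ with $v\in N_1\cap N_2\cap N_3$, and $N_{\overline{1}\overline{2}\overline{3}}$ the set of $v\in V(K_m)$ with $v\notin N_1\cup N_2\cup N_3$. *)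

(* Defs.v *)
From mathcomp Require Import all_boot.
Set Implicit Arguments. Unset Strict Implicit. Unset Printing Implicit Defensive.

Definition alternate (V : eqType) (x y : V) (w : seq V) : bool :=
  let s := [seq z <- w | (z == x) || (z == y)] in
  sorted (fun a b => a != b) s.

Definition word_representable (V : finType) (E : rel V) : Prop :=
  exists w : seq V, (forall v : V, v \in w) /\
    (forall x y : V, x != y -> (alternate x y w <-> E x y)).

Definition coBKm3 (m : nat) (a : 'I_m -> 'I_3 -> bool) : rel ('I_m + 'I_3) :=
  fun u v =>
    match u, v with
    | inl i, inl j => i != j
    | inr k, inr l => k != l
    | inl i, inr k => a i k
    | inr k, inl i => a i k
    end.

(* Main.v *)
Require Import Defs.
From mathcomp Require Import all_boot.
Set Implicit Arguments. Unset Strict Implicit. Unset Printing Implicit Defensive.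

Definition L := ('I_8 + 'I_3)%type.
Notation T n := (inl (@Ordinal 8 n isT) : L).
Notation E n := (inr (@Ordinal 3 n isT) : L).
Definition bitL (p : 'I_8) (t : 'I_3) : bool := odd (p %/ 2 ^ t).
Definition HL (p q : L) : bool :=
  match p, q with
  | inl p, inl q => p != q
  | inr t, inr u => t != u
  | inl p, inr t => bitL p t
  | inr t, inl p => bitL p t
  end.
Definition w0 : seq L :=
 [:: T 1; T 3; T 2; T 6; T 4; E 0; T 5; T 1; E 1; T 3; T 2; E 2; T 6; T 4; E 0;
     T 5; T 1; E 1; T 3; E 2; E 0; T 2; T 6; E 1; T 4; T 5; E 2].
Definition letters : seq L := [:: T 1; T 2; T 3; T 4; T 5; T 6; E 0; E 1; E 2].
Definition chk : bool :=
  all (fun p => all (fun q => (p != q) ==> (alternate p q w0 == HL p q)) letters) letters.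
Lemma w0_ok : chk.
Proof. vm_compute. reflexivity. Qed.
Lemma w0_all : all (fun l => l \in w0) letters.
Proof. vm_compute. reflexivity. Qed.

Lemma I3_cases (k : 'I_3) : k = ord0 \/ k = inord 1 \/ k = inord 2.
Proof.
case: k => [[|[|[|k]]] Hk] //.
- by left; apply: val_inj.
- by right; left; apply: val_inj; rewrite /= inordK.
- by right; right; apply: val_inj; rewrite /= inordK.
Qed.

Section Main.
Variables (m : nat) (a : 'I_m -> 'I_3 -> bool).
Hypothesis H1 : forall v : 'I_m, ~~ [forall k : 'I_3, a v k].
Hypothesis H2 : forall v : 'I_m, [exists k : 'I_3, a v k].

Definition code (v : 'I_m) : 'I_8 :=
  inord (a v ord0 + (a v (inord 1)).*2 + 4 * a v (inord 2)).

Lemma code_val v : (code v : nat) = a v ord0 + (a v (inord 1)).*2 + 4 * a v (inord 2).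
Proof.
rewrite /code inordK //.
by case: (a v ord0); case: (a v (inord 1)); case: (a v (inord 2)).
Qed.

Lemma bit_code v t : bitL (code v) t = a v t.
Proof.
rewrite /bitL code_val.
by case: (I3_cases t) => [->|[->|->]]; rewrite ?inordK //=;
  case: (a v ord0); case: (a v (inord 1)); case: (a v (inord 2)).
Qed.

Lemma code_valid v : (0 < code v) && (code v < 7).
Proof.
rewrite code_val.
have A1 : ~~ [&& a v ord0, a v (inord 1) & a v (inord 2)].
  apply: contra (H1 v) => /and3P [h0 h1 h2]; apply/forallP => k.
  by case: (I3_cases k) => [->|[->|->]].
have A2 : [|| a v ord0, a v (inord 1) | a v (inord 2)].
  case/existsP: (H2 v) => k.
  by case: (I3_cases k) => [->|[->|->]] ->; rewrite ?orbT.
move: A1 A2.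
by case: (a v ord0); case: (a v (inord 1)); case: (a v (inord 2)).
Qed.

Definition tau (x : 'I_m + 'I_3) : L :=
  match x with inl v => inl (code v) | inr t => inr t end.

Lemma tau_in x : tau x \in letters.
Proof.
case: x => [v|t] /=.
  move: (code_valid v); case: (code v) => [[|[|[|[|[|[|[|[|k]]]]]]]] Hp] //= _;
   by rewrite /letters !inE.
by case: t => [[|[|[|k]]] Hp] //=; rewrite /letters !inE.
Qed.

Definition V := ('I_m + 'I_3)%type.

Definition f (l : L) : seq V :=
  match l with
  | inl p => map (@inl 'I_m 'I_3) [seq v <- enum 'I_m | code v == p]
  | inr t => [:: inr t]
  end.

Lemma inl_inj : injective (@inl 'I_m 'I_3).
Proof. by move=> u v []. Qed.

Lemma f_uniq l : uniq (f l).
Proof.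
case: l => [p|t] //=.
by rewrite (map_inj_uniq inl_inj) filter_uniq // enum_uniq.
Qed.

Lemma mem_f x l : (x \in f l) = (tau x == l).
Proof.
case: l => [p|t]; case: x => [v|s] /=.
- by rewrite (mem_map inl_inj) mem_filter mem_enum andbT.
- by apply/mapP => -[u _].
- by rewrite inE.
- by rewrite inE.
Qed.

Definition W := flatten (map f w0).

Lemma W_all z : z \in W.
Proof.
apply/flatten_mapP; exists (tau z); last by rewrite mem_f.
by have /allP := w0_all; apply; apply: tau_in.
Qed.

Lemma edge x y : tau x != tau y -> coBKm3 a x y = HL (tau x) (tau y).
Proof.
case: x => [i|k]; case: y => [j|l] => Hne.
- have Hc : code i != code j := Hne.
  rewrite [LHS]/= [RHS]/= Hc.
  by apply/eqP => Hij; move: Hc; rewrite Hij eqxx.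
- by rewrite [RHS]/= bit_code.
- by rewrite [RHS]/= bit_code.
- by [].
Qed.

Lemma same x y : tau x = tau y -> x != y -> coBKm3 a x y.
Proof.
case: x => [i|k]; case: y => [j|l] //= Hxy Hne.
Qed.

Lemma alt_diff x y : tau x != tau y ->
  alternate x y W = alternate (tau x) (tau y) w0.
Proof.
move=> Hne.
have Hxy : x != y by apply: contraNneq Hne => ->.
pose g l := if l == tau x then x else y.
have key : forall s, [seq z <- flatten (map f s) | (z == x) || (z == y)]
   = map g [seq l <- s | (l == tau x) || (l == tau y)].
  elim=> [|l s IH] //=.
  rewrite filter_cat IH.
  case: (eqVneq l (tau x)) => [Elx|Nlx].
  - rewrite (@eq_in_filter _ _ (pred1 x)); last first.
      move=> z; rewrite mem_f Elx => /eqP Ez /=.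
      case: (z =P y) => [Ezy|]; last by rewrite orbF.
      by move: Hne; rewrite -Ez Ezy eqxx.
    by rewrite filter_pred1_uniq ?f_uniq ?mem_f ?Elx ?eqxx //= /g eqxx.
  case: (eqVneq l (tau y)) => [Ely|Nly].
  - rewrite (@eq_in_filter _ _ (pred1 y)); last first.
      move=> z; rewrite mem_f Ely => /eqP Ez /=.
      case: (z =P x) => [Ezx|] //=.
      by move: Hne; rewrite -Ez Ezx eqxx.
    rewrite filter_pred1_uniq ?f_uniq ?mem_f ?Ely ?eqxx //= ?orbT /= /g.
    by rewrite eq_sym (negbTE Hne).
  rewrite (@eq_in_filter _ _ pred0 (f l)) ?filter_pred0 /=; last first.
    move=> z; rewrite mem_f => /eqP Ez /=.
    by apply/negP => /orP [] /eqP Ezz; [move/eqP: Nlx|move/eqP: Nly]; apply; rewrite -Ez Ezz.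
  by [].
rewrite /alternate /W key sorted_map.
apply: (@eq_in_sorted _ (fun l => (l == tau x) || (l == tau y))); last first.
  exact: filter_all.
have Hyx : (tau y == tau x) = false by rewrite eq_sym (negbTE Hne).
move=> u v /orP [] /eqP -> /orP [] /eqP -> /=; rewrite /g ?eqxx ?Hyx //.
- by rewrite ?(eq_sym y x) ?Hxy ?Hne ?Hyx.
- by rewrite ?(eq_sym y x) ?Hxy ?Hne ?Hyx.
Qed.

Lemma rep_path (u v : V) k : u != v ->
  path (fun a b => a != b) v (flatten (nseq k [:: u; v])).
Proof.
move=> Huv; elim: k => [|k IH] //=.
by rewrite IH (eq_sym v u) Huv.
Qed.

Lemma alt_same x y : tau x = tau y -> x != y -> alternate x y W.
Proof.
move=> Hxy Hne.
set b := [seq z <- f (tau x) | (z == x) || (z == y)].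
have key : forall s, [seq z <- flatten (map f s) | (z == x) || (z == y)]
   = flatten (nseq (count_mem (tau x) s) b).
  elim=> [|l s IH] //=.
  rewrite filter_cat IH.
  case: (eqVneq l (tau x)) => [Elx|Nlx]; first by rewrite Elx.
  rewrite add0n (@eq_in_filter _ _ pred0 (f l)) ?filter_pred0 //.
  move=> z; rewrite mem_f => /eqP Ez /=.
  by apply/negP => /orP [] /eqP Ezz; move/eqP: Nlx; apply; rewrite -Ez Ezz // Hxy.
have bperm : perm_eq b [:: x; y].
  apply: uniq_perm.
  - by rewrite filter_uniq // f_uniq.
  - by rewrite /= inE Hne.
  move=> z; rewrite mem_filter !inE.
  case: (z =P x) => [->|_]; first by rewrite mem_f eqxx.
  case: (z =P y) => [->|_] //; by rewrite mem_f Hxy eqxx.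
have bu : uniq b by rewrite filter_uniq // f_uniq.
move: (perm_size bperm) bu.
rewrite /alternate /W key; clear key bperm; clearbody b.
case: b => [|u [|v [|? ?]]] // _ /andP [].
rewrite inE => Huv _.
case: (count_mem (tau x) w0) => [|k] //. by rewrite /= Huv rep_path.
Qed.

End Main.

Theorem mainTheorem9 (m : nat) (a : 'I_m -> 'I_3 -> bool) :
  0 < m ->
  (* N_123 is empty: no vertex of K_m is adjacent to all of 1,2,3 *)
  (forall v : 'I_m, ~~ [forall k : 'I_3, a v k]) ->
  (* N_{not1 not2 not3} is empty: every vertex of K_m has a neighbour in {1,2,3} *)
  (forall v : 'I_m, [exists k : 'I_3, a v k]) ->
  word_representable (coBKm3 a).
Proof.
move=> _ H1 H2.
exists (W a); split; first exact: W_all.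
move=> x y Hne.
case: (tau a x =P tau a y) => [E1|/eqP N1].
  by split=> _; [apply: same | apply: alt_same].
rewrite alt_diff // edge //.
have /allP /(_ _ (tau_in H1 H2 x)) /allP /(_ _ (tau_in H1 H2 y)) := w0_ok.
by rewrite N1 /= => /eqP ->.
Qed.
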